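(* Let $V$ be a countable set, $\Omega_0$ a finite set, $\Omega=\Omega_0^V$ with product $\sigma$-algebra $\mathcal F$, let $q\in\mathbb N$, and let $\Lambda\subset V$. Let $\gamma_\Lambda$ be a proper probability $q$-kernel. For $\eta\in\Omega$ put $\Omega_\Lambda^{\eta}=\{\sigma\in\Omega:\ \sigma_{\Lambda^c}=\eta_{\Lambda^c}\}$ and, for $\eta_1,\dots,\eta_q\in\Omega$, $\Omega_\Lambda^{\eta_1,\dots,\eta_q}=\bigcup_{i=1}^q\Omega_\Lambda^{\eta_i}$. Then for all $\eta_1,\dots,\eta_q\in\Omega$ the probability measure $\gamma_\Lambda(\cdot\mid\eta_1,\dots,\eta_q)$ is supported on $\Omega_\Lambda^{\eta_1,\dots,\eta_q}$, i.e. $\gamma_\Lambda(\Omega_\Lambda^{\eta_1,\dots,\eta_q}\mid\eta_1,\dots,\eta_q)=1$.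
   Context: For $\Delta\subset V$, $\mathcal F_\Delta$ denotes the $\sigma$-algebra on $\Omega$ generated by the coordinate maps $\sigma\mapsto\sigma_x$, $x\in\Delta$; $\sigma_\Delta$ denotes the restriction of $\sigma$ to $\Delta$. $\mathcal F^q=\mathcal F^{\otimes q}$ on $\Omega^q$ and $\mathcal F^q_{\Lambda^c}=(\mathcal F_{\Lambda^c})^{\otimes q}$. A probability $q$-kernel (from $\mathcal F^q_{\Lambda^c}$ to $\mathcal F$) is a map $\gamma_\Lambda:\mathcal F\times\Omega^q\to[0,1]$, $(A,(\eta_1,\dots,\eta_q))\mapsto\gamma_\Lambda(A\mid\eta_1,\dots,\eta_q)$, such that (i) $\gamma_\Lambda(\cdot\mid\eta_1,\dots,\eta_q)$ is a probability measure on $(\Omega,\mathcal F)$ for all $\eta_1,\dots,\eta_q\in\Omega$, and (ii) $\gamma_\Lambda(A\mid\cdot,\dots,\cdot)$ is $\mathcal F^q_{\Lambda^c}$-measurable for every $A\in\mathcal F$. It is proper if $\gamma_\Lambda(A\mid\eta_1,\dots,\eta_q)=\frac1q\sum_{i=1}^q\mathbf 1_A(\eta_i)$ for all $A\in\mathcal F_{\Lambda^c}$ and all $\eta_1,\dots,\eta_q$. *)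

(* Defs.v *)
From HB Require Import structures.
From mathcomp Require Import all_boot all_order all_algebra.
From mathcomp Require Import all_classical all_reals all_analysis.
From mathcomp Require Import measurable_realfun.
Set Implicit Arguments. Unset Strict Implicit. Unset Printing Implicit Defensive.
Import Order.TTheory GRing.Theory Num.Theory.
Local Open Scope classical_set_scope.
Local Open Scope ring_scope.

Definition config (V : Type) (O0 : Type) := V -> O0.

(* Generators of F_Delta: preimages of (arbitrary, Omega0 being finite and
   discrete) subsets of Omega0 under coordinate maps sigma |-> sigma_x, x in Delta. *)
Definition coord_gen (V O0 : Type) (Delta : set V) : set (set (config V O0)) :=
  [set A | exists x, Delta x /\ exists B : set O0, A = (fun s : config V O0 => s x) @^-1` B].

Definition F_ (V O0 : Type) (Delta : set V) : set (set (config V O0)) :=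
  <<s @coord_gen V O0 Delta >>.

Definition Omega (V : Type) (O0 : Type) := g_sigma_algebraType (@coord_gen V O0 setT).

(* Generators of F^q_Delta = (F_Delta)^{\otimes q} on Omega^q: preimages of
   F_Delta-sets under the projections (eta_1..eta_q) |-> eta_i. *)
Definition prod_gen (V O0 : Type) (q : nat) (Delta : set V)
  : set (set ('I_q -> config V O0)) :=
  [set E | exists i : 'I_q, exists A, @F_ V O0 Delta A /\
     E = (fun e : 'I_q -> config V O0 => e i) @^-1` A].

Definition Omegaq (V O0 : Type) (q : nat) (Delta : set V) :=
  g_sigma_algebraType (@prod_gen V O0 q Delta).

Definition OmegaL (V O0 : Type) (Lambda : set V) (eta : config V O0)
  : set (config V O0) :=
  [set s | forall x, (~` Lambda) x -> s x = eta x].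

Definition OmegaLq (V O0 : Type) (q : nat) (Lambda : set V)
  (etas : 'I_q -> config V O0) : set (config V O0) :=
  \bigcup_(i in [set: 'I_q]) OmegaL Lambda (etas i).

(* A probability q-kernel from F^q_{Lambda^c} to F: condition (i) is built into
   the type of gamma (each gamma etas is a probability on (Omega, F)); this is
   condition (ii). *)
Definition is_q_kernel (R : realType) (V : Type) (O0 : pointedType) (q : nat)
  (Lambda : set V) (gamma : ('I_q -> Omega V O0) -> probability (Omega V O0) R) :=
  forall A : set (Omega V O0), measurable A ->
    measurable_fun [set: @Omegaq V O0 q (~` Lambda)] (fun e => gamma e A).

Definition proper_kernel (R : realType) (V : Type) (O0 : pointedType) (q : nat)
  (Lambda : set V) (gamma : ('I_q -> Omega V O0) -> probability (Omega V O0) R) :=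
  forall A : set (Omega V O0), @F_ V O0 (~` Lambda) A ->
    forall etas : 'I_q -> Omega V O0,
      gamma etas A = ((q%:R)^-1 * \sum_(i < q) \1_A (etas i))%:E.

(* Main.v *)
Require Import Defs.
From HB Require Import structures.
From mathcomp Require Import all_boot all_order all_algebra.
From mathcomp Require Import all_classical all_reals all_analysis.
From mathcomp Require Import measurable_realfun.
Import GRing.Theory Num.Theory.
Local Open Scope classical_set_scope.
Local Open Scope ring_scope.

Lemma sigD (T : Type) (G : set (set T)) (A : set T) :
  <<s G >> A -> <<s G >> (setT `\` A).
Proof. by case: (smallest_sigma_algebra setT G) => _ h _; apply: h. Qed.

Lemma OmegaL_F (V : countType) (O0 : Type) (Lambda : set V) (eta : config V O0) :
  @F_ V O0 (~` Lambda) (OmegaL Lambda eta).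
Proof.
pose C := fun n : nat => match (unpickle n : option V) with
  | Some x => if pselect ((~` Lambda) x)
              then (fun s : config V O0 => s x) @^-1` (~` [set eta x])
              else set0
  | None => set0 end.
have -> : OmegaL Lambda eta = setT `\` \bigcup_n C n.
  apply/seteqP; split => s /=.
  - move=> hs; split => // -[n _]; rewrite /C.
    case: (unpickle n) => // x; case: pselect => // hx /=.
    by apply; rewrite hs.
  - move=> [_ hn] x hx; apply: contrapT => nx; apply: hn.
    exists (pickle x) => //; rewrite /C pickleK.
    by case: pselect.
apply: sigD; apply: sigma_algebra_bigcup => n; rewrite /C.
case: (unpickle n) => [x|].
  case: pselect => hx.
    apply: sub_gen_smallest; exists x; split => //.
    by eexists.
  by case: (smallest_sigma_algebra setT (@coord_gen V O0 (~` Lambda))).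
by case: (smallest_sigma_algebra setT (@coord_gen V O0 (~` Lambda))).
Qed.

Theorem mainTheorem1 (R : realType) (V : countType) (O0 : pointedType)
  (hO0 : finite_set [set: O0]) (q : nat) (hq : (0 < q)%N) (Lambda : set V)
  (gamma : ('I_q -> Omega V O0) -> probability (Omega V O0) R)
  (hker : is_q_kernel Lambda gamma) (hprop : proper_kernel Lambda gamma) :
  forall etas : 'I_q -> Omega V O0, gamma etas (OmegaLq Lambda etas) = 1%E.
Proof.
move=> etas.
have hF : @F_ V O0 (~` Lambda) (OmegaLq Lambda etas).
  pose C := fun n : nat => match ltnP n q with
    | LtnNotGeq h => OmegaL Lambda (etas (Ordinal h))
    | _ => set0 end.
  have -> : OmegaLq Lambda etas = \bigcup_n C n.
    apply/seteqP; split => s /=.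
    - move=> [i _ hi]; exists (val i) => //; rewrite /C.
      case: ltnP => h; last by move: (ltn_ord i); rewrite ltnNge h.
      by have -> : Ordinal h = i by apply: val_inj.
    - move=> [n _]; rewrite /C; case: ltnP => // h hs.
      by exists (Ordinal h).
  apply: sigma_algebra_bigcup => n; rewrite /C.
  case: ltnP => h; first exact: OmegaL_F.
  by case: (smallest_sigma_algebra setT (@coord_gen V O0 (~` Lambda))).
rewrite (hprop _ hF etas).
have -> : \sum_(i < q) \1_(OmegaLq Lambda etas) (etas i) = \sum_(i < q) (1 : R).
  apply: eq_bigr => i _; rewrite indicE.
  suff -> : etas i \in OmegaLq Lambda etas by [].
  by apply/mem_set; exists i.
rewrite sumr_const card_ord mulVf //.
by rewrite pnatr_eq0 -lt0n.
Qed.
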